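(* Let $K_{23}-K_5$ denote the graph with vertex set $\mathbb{Z}_{18}\cup\{a,b,c,d,e\}$ containing all edges except the ten edges among $a,b,c,d,e$. Consider the cyclic sequences $$L_0=(10, 16, a, 2, b, 4, c, 8, d, 7, e, 17, 14, 3, 9, 12, 13, 5, 1, 6, 15, 11),$$ $$L_1=(8, 1, a, 2, 12, 9, 3, 7, c, 14, b, 13, e, 11, d, 16, 10, 5, 17, 4, 15, 6),$$ $$L_2=(16, a, 17, 7, 4, 3, 12, 2, d, 10, c, 11, 14, 13, 8, 6, 9, 15, 1, e, 5, b).$$ For $\gamma\in\mathbb{Z}_{18}$, let the rotation at $\gamma$ be obtained from $L_{\gamma\bmod 3}$ by adding $\gamma$ (mod 18) to every numerical entry, leaving letters unchanged. Then there exist rotations at $a,b,c,d,e$ such that the resulting rotation system is a triangular embedding of $K_{23}-K_5$ in the orientable surface $S_{30}$ of genus $30$.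
   Context: A rotation system on a simple graph assigns to each vertex a cyclic ordering of its neighbors and determines a cellular orientable embedding. An embedding is triangular if every face is a triangle. $S_k$ denotes the orientable surface of genus $k$. *)

(* Defs.v *)
From mathcomp Require Import all_boot.
Set Implicit Arguments. Unset Strict Implicit. Unset Printing Implicit Defensive.

(* Vertices of K_23 - K_5: inl i is i in Z_18, inr j is the j-th letter
   (a,b,c,d,e = inr 0,...,inr 4). *)
Definition V : finType := ('I_18 + 'I_5)%type.

Definition num (k : nat) : V := inl (inord k).
Definition let_a : V := inr (inord 0).
Definition let_b : V := inr (inord 1).
Definition let_c : V := inr (inord 2).
Definition let_d : V := inr (inord 3).
Definition let_e : V := inr (inord 4).

Definition is_letter (v : V) : bool := if v is inr _ then true else false.

Definition adjK (u v : V) : bool := (u != v) && ~~ (is_letter u && is_letter v).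

(* A rotation system: rho v is a cyclic ordering (a duplicate-free
   sequence read cyclically) of exactly the neighbours of v. *)
Definition is_rotation_system (T : finType) (adj : rel T) (rho : T -> seq T) : Prop :=
  forall v, uniq (rho v) /\ forall u, (u \in rho v) = adj v u.

Definition darts (T : finType) (adj : rel T) : {set T * T} :=
  [set p | adj p.1 p.2].

Definition face_step (T : finType) (rho : T -> seq T) (p : T * T) : T * T :=
  (p.2, next (rho p.2) p.1).

Definition triangular (T : finType) (adj : rel T) (rho : T -> seq T) : Prop :=
  forall u v, adj u v -> iter 3 (face_step rho) (u, v) = (u, v).

Definition num_faces (T : finType) (adj : rel T) (rho : T -> seq T) : nat :=
  fcard (face_step rho) (mem (darts adj)).

Definition num_edges (T : finType) (adj : rel T) : nat := #|darts adj| %/ 2.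

(* The (connected graph's) rotation system embeds in S_g iff
   V - E + F = 2 - 2g, written without subtraction. *)
Definition embeds_in_genus (T : finType) (adj : rel T) (rho : T -> seq T) (g : nat) : Prop :=
  #|T| + num_faces adj rho + 2 * g = num_edges adj + 2.

Definition L0 : seq V :=
  [:: num 10; num 16; let_a; num 2; let_b; num 4; let_c; num 8; let_d; num 7; let_e;
      num 17; num 14; num 3; num 9; num 12; num 13; num 5; num 1; num 6; num 15; num 11].
Definition L1 : seq V :=
  [:: num 8; num 1; let_a; num 2; num 12; num 9; num 3; num 7; let_c; num 14; let_b;
      num 13; let_e; num 11; let_d; num 16; num 10; num 5; num 17; num 4; num 15; num 6].
Definition L2 : seq V :=
  [:: num 16; let_a; num 17; num 7; num 4; num 3; num 12; num 2; let_d; num 10; let_c;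
      num 11; num 14; num 13; num 8; num 6; num 9; num 15; num 1; let_e; num 5; let_b].

Definition Lbase (r : nat) : seq V :=
  match r with 0 => L0 | 1 => L1 | _ => L2 end.

Definition shift (g : nat) (x : V) : V :=
  match x with inl i => num ((i + g) %% 18) | inr j => inr j end.

Definition rot_sys (rhoL : 'I_5 -> seq V) (v : V) : seq V :=
  match v with
  | inl g => map (shift g) (Lbase (g %% 3))
  | inr j => rhoL j
  end.

(* Main.v *)
Require Import Defs.
From mathcomp Require Import all_boot.

Definition numT (k : nat) : V := inl (Ordinal (ltn_pmod k (erefl true : 0 < 18))).
Definition letT (k : nat) : V := inr (Ordinal (ltn_pmod k (erefl true : 0 < 5))).

Definition rhoL0 (j : 'I_5) : seq V :=
  match val j with
  | 0 => [:: numT 0; numT 16; numT 17; numT 15; numT 13; numT 14; numT 12; numT 10; numT 11; numT 9; numT 7; numT 8; numT 6; numT 4; numT 5; numT 3; numT 1; numT 2]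
  | 1 => [:: numT 0; numT 2; numT 7; numT 3; numT 5; numT 10; numT 6; numT 8; numT 13; numT 9; numT 11; numT 16; numT 12; numT 14; numT 1; numT 15; numT 17; numT 4]
  | 2 => [:: numT 0; numT 4; numT 11; numT 3; numT 7; numT 14; numT 6; numT 10; numT 17; numT 9; numT 13; numT 2; numT 12; numT 16; numT 5; numT 15; numT 1; numT 8]
  | 3 => [:: numT 0; numT 8; numT 10; numT 3; numT 11; numT 13; numT 6; numT 14; numT 16; numT 9; numT 17; numT 1; numT 12; numT 2; numT 4; numT 15; numT 5; numT 7]
  | 4 => [:: numT 0; numT 7; numT 2; numT 3; numT 10; numT 5; numT 6; numT 13; numT 8; numT 9; numT 16; numT 11; numT 12; numT 1; numT 14; numT 15; numT 4; numT 17]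
  | _ => [::]
  end.

Definition LbaseT (r : nat) : seq V :=
  match r with 0 => [:: numT 10; numT 16; letT 0; numT 2; letT 1; numT 4; letT 2; numT 8; letT 3; numT 7; letT 4; numT 17; numT 14; numT 3; numT 9; numT 12; numT 13; numT 5; numT 1; numT 6; numT 15; numT 11] | 1 => [:: numT 8; numT 1; letT 0; numT 2; numT 12; numT 9; numT 3; numT 7; letT 2; numT 14; letT 1; numT 13; letT 4; numT 11; letT 3; numT 16; numT 10; numT 5; numT 17; numT 4; numT 15; numT 6] | _ => [:: numT 16; letT 0; numT 17; numT 7; numT 4; numT 3; numT 12; numT 2; letT 3; numT 10; letT 2; numT 11; numT 14; numT 13; numT 8; numT 6; numT 9; numT 15; numT 1; letT 4; numT 5; letT 1] end.

Definition shiftT (g : nat) (x : V) : V :=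
  match x with inl i => numT (i + g) | inr j => inr j end.

Definition rotT (v : V) : seq V :=
  match v with
  | inl g => map (shiftT g) (LbaseT (g %% 3))
  | inr j => rhoL0 j
  end.

Lemma numE k : k < 18 -> num k = numT k.
Proof. by move=> h; rewrite /num /numT; congr inl; apply: val_inj => /=; rewrite inordK // modn_small. Qed.

Lemma numE' k : num (k %% 18) = numT k.
Proof. by rewrite /num /numT; congr inl; apply: val_inj => /=; rewrite inordK // ltn_pmod. Qed.

Lemma letE k : k < 5 -> (inr (inord k) : V) = letT k.
Proof. by move=> h; rewrite /letT; congr inr; apply: val_inj => /=; rewrite inordK // modn_small. Qed.

Lemma LbaseE r : Lbase r = LbaseT r.
Proof.
by case: r => [|[|r]]; rewrite /Lbase /LbaseT /L0 /L1 /L2 /let_a /let_b /let_c /let_d /let_e !numE // !letE.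
Qed.

Lemma shiftE g x : shift g x = shiftT g x.
Proof. by case: x => //= i; rewrite numE'. Qed.

Lemma rotE v : rot_sys rhoL0 v = rotT v.
Proof. by case: v => //= g; rewrite LbaseE; apply: eq_map => x; rewrite shiftE. Qed.

Definition allV : seq V := map numT (iota 0 18) ++ map letT (iota 0 5).

Lemma allV_all v : v \in allV.
Proof.
rewrite mem_cat; apply/orP; case: v => i; [left|right]; apply/mapP; exists (val i);
  rewrite ?mem_iota ?ltn_ord //; [rewrite /numT; congr inl | rewrite /letT; congr inr];
  by apply: val_inj => /=; rewrite modn_small ?ltn_ord.
Qed.

Definition allPr : seq (V * V) := [seq (u, v) | u <- allV, v <- allV].

Lemma allP_all p : p \in allPr.
Proof. by case: p => u v; apply: allpairs_f; apply: allV_all. Qed.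

Definition fT := face_step rotT.

Lemma check1 : all (fun v => uniq (rotT v) && all (fun u => (u \in rotT v) == adjK v u) allV) allV.
Proof. vm_compute. reflexivity. Qed.

Lemma check2 : all (fun p => (adjK (fT p).1 (fT p).2 == adjK p.1 p.2) &&
   (adjK p.1 p.2 ==> (fT (fT (fT p)) == p) && uniq [:: p; fT p; fT (fT p)])) allPr.
Proof. vm_compute. reflexivity. Qed.

Definition dl := filter (fun p => adjK p.1 p.2) allPr.

Lemma check3 : uniq dl && (size dl == 486).
Proof. vm_compute. reflexivity. Qed.

Theorem mainTheorem5 :
  exists rhoL : 'I_5 -> seq V,
    is_rotation_system adjK (rot_sys rhoL) /\
    triangular adjK (rot_sys rhoL) /\
    embeds_in_genus adjK (rot_sys rhoL) 30.
Proof.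
have fE p : face_step (rot_sys rhoL0) p = fT p by rewrite /face_step /fT /= rotE.
have c2 p := seq.allP (check2) p (allP_all p).
have RS : is_rotation_system adjK (rot_sys rhoL0).
  move=> v; have /andP[U /seq.allP H] := seq.allP check1 v (allV_all v).
  by rewrite rotE; split=> // u; apply/eqP; apply: H; apply: allV_all.
exists rhoL0; split=> //; split.
- move=> u v Huv; have /andP[_ /implyP /(_ Huv) /andP[/eqP h _]] := c2 (u, v).
  by rewrite /= !fE.
- have cardD : #|darts adjK| = 486.
    have /andP[U /eqP S] := check3.
    rewrite -S -(card_uniqP U); apply: eq_card => p.
    by rewrite inE mem_filter allP_all andbT.
  have injf : injective (face_step (rot_sys rhoL0)).
    move=> [u v] [u' v']; rewrite /face_step /= => [[<-]] h.
    have [U _] := RS v.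
    by rewrite -[u](prev_next U) h prev_next.
  have H := fcard_order_set injf (n := 3) (a := darts adjK).
  rewrite /embeds_in_genus /num_faces /num_edges cardD card_sum !card_ord.
  suff -> : fcard (face_step (rot_sys rhoL0)) (darts adjK) = 162 by [].
  have : fcard (face_step (rot_sys rhoL0)) (darts adjK) * 3 = 486.
    rewrite -cardD; apply: H.
      apply/subsetP => p; rewrite inE => Hp; rewrite inE.
      have /andP[_ /implyP /(_ Hp) /andP[/eqP h U]] := c2 p.
      rewrite (@order_cycle _ _ [:: p; fT p; fT (fT p)]) //.
        by rewrite /cycle /= !fE h !eqxx.
      by rewrite inE eqxx.
    move=> x y /eqP <-; rewrite !inE fE.
    by have /andP[/eqP -> _] := c2 x.
  by move/eqP; rewrite -[486]/(162 * 3) eqn_mul2r /= => /eqP.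
Qed.
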